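(* Let $B,\lambda>0$, $q\in\mathbb N$, $\alpha\in(0,1]$, $\beta=q+\alpha\ge1/2$, and let $\mathcal F$ be the set of functions $f:[0,1]\to\mathbb R$ that are $q$ times differentiable with $\|f^{(k)}\|_\infty\le B$ for all $k\in\{0,\ldots,q\}$ and $|f^{(q)}(x)-f^{(q)}(y)|\le\lambda|x-y|^\alpha$ for all $x,y\in[0,1]$. Let $\gamma>0$, $\delta_x=2(q!\gamma/(2\lambda))^{1/\beta}$, $\delta_y=\gamma/e$, and assume $1/\delta_x$ and $2B/\delta_y$ are integers. Then, with $\mathcal F^{(0)}$ and $\mathcal F^{(M)}$ as defined in the context: (i) for every $f\in\mathcal F$ there is $g\in\mathcal F^{(0)}$ with $\|f-g\|_\infty\le\gamma$; (ii) for every $M\ge1$ and every $f\in\mathcal F$ there is $g\in\mathcal F^{(M)}$ with $\|f-g\|_\infty\le\gamma/2^M$.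
   Context: $[x]_c=\min\{c,\max\{-c,x\}\}$ denotes clipping. Let $I_a=[(a-1)\delta_x,a\delta_x)$, $a=1,\ldots,1/\delta_x$ (last closed at $1$), with center $x_a$. For $m\ge1$ split $I_a$ into $4^m$ consecutive subintervals $I_a^{(m,n)}$, $n=1,\ldots,4^m$, of length $\delta_x/4^m$, with centers $x_a^{(m,n)}$; for $m\ge2$ let $n_{m-1}$ be the index with $I_a^{(m,n)}\subset I_a^{(m-1,n_{m-1})}$. Let $\mathcal Y^{(m)}=\{-B+j\delta_y/2^m:j=0,\ldots,2^{m+1}B/\delta_y\}$ for $m\ge0$. Let $\mathcal P_a^{(0)}$ be the set of functions $x\mapsto[\sum_{i=0}^q\frac{a_i}{i!}(x-x_a)^i]_B$ with $a_0,\ldots,a_q\in\mathcal Y^{(0)}$, and $\mathcal P_a^{(m,n)}$ the set of functions $x\mapsto[\sum_{i=0}^q\frac{a_i}{i!}(x-x_a^{(m,n)})^i]_B$ with $a_i\in\mathcal Y^{(m)}$. Let $\mathcal Q_a^{(m,n)}=\{[P-P']_{3\gamma/2^m}:P\in\mathcal P_a^{(m,n)},P'\in\mathcal P_a^{(m-1,n_{m-1})}\}$ for $m\ge2$, and with $\mathcal P_a^{(0)}$ in place of $\mathcal P_a^{(m-1,n_{m-1})}$ for $m=1$. $\mathcal F^{(0)}$ is the set of functions $\sum_{a}P_a^{(0)}(x)\mathbb 1\{x\in I_a\}$ with $P_a^{(0)}\in\mathcal P_a^{(0)}$; $\mathcal F^{(M)}$ is the set of functions $\sum_aP_a^{(0)}(x)\mathbb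 1\{x\in I_a\}+\sum_{m=1}^M\sum_a\sum_{n=1}^{4^m}Q_a^{(m,n)}(x)\mathbb 1\{x\in I_a^{(m,n)}\}$ with $P_a^{(0)}\in\mathcal P_a^{(0)}$, $Q_a^{(m,n)}\in\mathcal Q_a^{(m,n)}$. *)

(* Defs.v *)
From Stdlib Require Import Reals ClassicalDescription Factorial.
From Coquelicot Require Import Coquelicot.
Open Scope R_scope.

(* x^a for x >= 0, with the usual convention 0^a = 0 (a > 0). *)
Definition powr (x a : R) : R := if Rle_dec x 0 then 0 else Rpower x a.

Definition clip (c x : R) : R := Rmin c (Rmax (- c) x).

Definition ind (P : Prop) : R := if excluded_middle_informative P then 1 else 0.

(* g has derivative l at x relative to [0,1] (one-sided at the endpoints) *)
Definition derive01 (g : R -> R) (x l : R) : Prop :=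
  filterlim (fun y => (g y - g x) / (y - x))
    (within (fun y => 0 <= y <= 1 /\ y <> x) (locally x)) (locally l).

Definition HolderClass (B lam : R) (q : nat) (alpha : R) (f : R -> R) : Prop :=
  exists D : nat -> R -> R,
    (forall x, 0 <= x <= 1 -> D 0%nat x = f x) /\
    (forall k x, (k < q)%nat -> 0 <= x <= 1 -> derive01 (D k) x (D (S k) x)) /\
    (forall k x, (k <= q)%nat -> 0 <= x <= 1 -> Rabs (D k x) <= B) /\
    (forall x y, 0 <= x <= 1 -> 0 <= y <= 1 ->
       Rabs (D q x - D q y) <= lam * powr (Rabs (x - y)) alpha).

Section Classes.
Variables (B dx dy gamma : R) (q N : nat).

Definition inIv (lo hi x : R) : Prop := (lo <= x < hi) \/ (x = hi /\ hi = 1).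

(* I_a, a = 1..N *)
Definition inI (a : nat) (x : R) : Prop := inIv ((INR a - 1) * dx) (INR a * dx) x.
Definition xc (a : nat) : R := (INR a - 1/2) * dx.

(* I_a^(m,n), n = 1..4^m *)
Definition inIsub (a m n : nat) (x : R) : Prop :=
  inIv ((INR a - 1) * dx + (INR n - 1) * dx / 4 ^ m)
       ((INR a - 1) * dx + INR n * dx / 4 ^ m) x.
Definition xcsub (a m n : nat) : R := (INR a - 1) * dx + (INR n - 1/2) * dx / 4 ^ m.

Definition inY (m : nat) (y : R) : Prop :=
  exists j : nat, INR j <= 2 ^ (m + 1) * B / dy /\ y = - B + INR j * dy / 2 ^ m.

Definition taylor (c : nat -> R) (x0 x : R) : R :=
  sum_n_m (fun i => c i / INR (fact i) * (x - x0) ^ i) 0 q.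

Definition inP0 (a : nat) (g : R -> R) : Prop :=
  exists c : nat -> R, (forall i, (i <= q)%nat -> inY 0 (c i)) /\
    g = (fun x => clip B (taylor c (xc a) x)).

Definition inP (a m n : nat) (g : R -> R) : Prop :=
  exists c : nat -> R, (forall i, (i <= q)%nat -> inY m (c i)) /\
    g = (fun x => clip B (taylor c (xcsub a m n) x)).

Definition inQ (a m n : nat) (h : R -> R) : Prop :=
  exists P P' : R -> R, inP a m n P /\
    ((m = 1%nat /\ inP0 a P') \/
     ((2 <= m)%nat /\ exists n', (1 <= n' <= 4 ^ (m - 1))%nat /\
          (forall x, inIsub a m n x -> inIsub a (m - 1) n' x) /\
          inP a (m - 1) n' P')) /\
    h = (fun x => clip (3 * gamma / 2 ^ m) (P x - P' x)).

Definition inF0 (g : R -> R) : Prop :=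
  exists P0 : nat -> R -> R,
    (forall a, (1 <= a <= N)%nat -> inP0 a (P0 a)) /\
    g = (fun x => sum_n_m (fun a => P0 a x * ind (inI a x)) 1 N).

Definition inFM (M : nat) (g : R -> R) : Prop :=
  exists (P0 : nat -> R -> R) (Q : nat -> nat -> nat -> R -> R),
    (forall a, (1 <= a <= N)%nat -> inP0 a (P0 a)) /\
    (forall m a n, (1 <= m <= M)%nat -> (1 <= a <= N)%nat -> (1 <= n <= 4 ^ m)%nat ->
        inQ a m n (Q m a n)) /\
    g = (fun x => sum_n_m (fun a => P0 a x * ind (inI a x)) 1 N +
          sum_n_m (fun m => sum_n_m (fun a => sum_n_m (fun n =>
             Q m a n x * ind (inIsub a m n x)) 1 (4 ^ m)) 1 N) 1 M).
End Classes.

(* Main.v *)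
Require Import Defs.
From Stdlib Require Import Reals Factorial Lra Lia IndefiniteDescription ClassicalDescription.
From Coquelicot Require Import Coquelicot.
Open Scope R_scope.

Definition Tpoly (c : nat -> R) (x0 : R) (n : nat) (y : R) : R :=
  sum_n_m (fun i => c i / INR (fact i) * (y - x0) ^ i) 0 n.

Lemma Tpoly_S c x0 n y :
  Tpoly c x0 (S n) y = Tpoly c x0 n y + c (S n) / INR (fact (S n)) * (y - x0) ^ (S n).
Proof. unfold Tpoly. rewrite sum_n_Sm; [reflexivity|lia]. Qed.

Lemma Tpoly_0 c x0 y : Tpoly c x0 0 y = c 0%nat.
Proof. unfold Tpoly. rewrite sum_n_n. simpl. field. Qed.

Lemma Tpoly_ext c d x0 n y : (forall i, (i <= n)%nat -> c i = d i) ->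
  Tpoly c x0 n y = Tpoly d x0 n y.
Proof. intros H. unfold Tpoly. apply sum_n_m_ext_loc. intros k Hk. rewrite H; [reflexivity|lia]. Qed.

Lemma Tpoly_at c x0 n : Tpoly c x0 n x0 = c 0%nat.
Proof. induction n. apply Tpoly_0. rewrite Tpoly_S, IHn.
  replace (x0 - x0) with 0 by ring. simpl. ring. Qed.

Lemma mono_derive K x0 p y :
  is_derive (fun y => K * (y - x0) ^ (S p)) y (K * (INR (S p) * (y - x0) ^ p)).
Proof. auto_derive; auto. f_equal. rewrite Rmult_1_l. destruct p; [simpl; reflexivity|]. rewrite (S_INR (S p)). reflexivity. Qed.

Lemma Tpoly_derive c x0 n y :
  is_derive (Tpoly c x0 (S n)) y (Tpoly (fun i => c (S i)) x0 n y).
Proof.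
  induction n.
  - apply (is_derive_ext (fun y => c 0%nat + c 1%nat * (y - x0))).
    + intros t. rewrite Tpoly_S, Tpoly_0. simpl. field.
    + rewrite Tpoly_0. auto_derive; auto. ring.
  - apply (is_derive_ext (fun y => Tpoly c x0 (S n) y +
        c (S (S n)) / INR (fact (S (S n))) * (y - x0) ^ (S (S n)))).
    + intros t. rewrite (Tpoly_S c x0 (S n)). reflexivity.
    + rewrite Tpoly_S. apply (is_derive_plus (Tpoly c x0 (S n)) (fun y => c (S (S n)) / INR (fact (S (S n))) * (y - x0) ^ (S (S n)))). exact IHn.
      replace (c (S (S n)) / INR (fact (S n)) * (y - x0) ^ S n) with
        (c (S (S n)) / INR (fact (S (S n))) * (INR (S (S n)) * (y - x0) ^ (S n))).
      apply mono_derive.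
      rewrite (fact_simpl (S n)). rewrite mult_INR.
      pose proof (INR_fact_neq_0 (S n)).
      assert (INR (S (S n)) <> 0) by (apply not_0_INR; lia).
      simpl pred. field. split; auto.
Qed.

Lemma d01_quot g x l eps : derive01 g x l -> 0 < eps ->
  exists d : posreal, forall y, Rabs (y - x) < d -> 0 <= y <= 1 -> y <> x ->
    Rabs ((g y - g x) / (y - x) - l) < eps.
Proof.
  intros H He.
  assert (HL : locally l (fun z => Rabs (z - l) < eps)).
  { exists (mkposreal eps He). intros z Hz. exact Hz. }
  specialize (H _ HL). destruct H as [d Hd].
  exists d. intros y Hy H1 H2. apply (Hd y). exact Hy. split; auto.
Qed.

Lemma d01_interior g x l : 0 < x < 1 -> derive01 g x l -> derivable_pt_lim g x l.
Proof.
  intros Hx H eps He. destruct (d01_quot g x l eps H He) as [d Hd].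
  assert (Hp : 0 < Rmin d (Rmin x (1 - x))).
  { apply Rmin_pos. apply cond_pos. apply Rmin_pos; lra. }
  exists (mkposreal _ Hp). intros h Hh0 Hh. simpl in Hh.
  assert (h1 := Rmin_l d (Rmin x (1 - x))).
  assert (h2 := Rmin_r d (Rmin x (1 - x))).
  assert (h3 := Rmin_l x (1 - x)). assert (h4 := Rmin_r x (1 - x)).
  replace h with ((x + h) - x) at 2 by ring.
  apply Hd.
  - replace (x + h - x) with h by ring. lra.
  - apply Rabs_def2 in Hh. lra.
  - lra.
Qed.

Definition cw (f : R -> R) (a b t : R) : Prop :=
  forall eps, 0 < eps -> exists d, 0 < d /\
    forall y, a <= y <= b -> Rabs (y - t) < d -> Rabs (f y - f t) < eps.

Lemma d01_cw g x l a b : 0 <= a -> b <= 1 -> derive01 g x l -> cw g a b x.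
Proof.
  intros Ha Hb H eps He. destruct (d01_quot g x l 1 H Rlt_0_1) as [d Hd].
  assert (Hl : 0 < Rabs l + 1) by (pose proof (Rabs_pos l); lra).
  exists (Rmin d (eps / (Rabs l + 1))). split.
  { apply Rmin_pos. apply cond_pos. apply Rdiv_lt_0_compat; lra. }
  intros y Hy Hyt.
  assert (h1 := Rmin_l d (eps / (Rabs l + 1))).
  assert (h2 := Rmin_r d (eps / (Rabs l + 1))).
  destruct (Req_dec y x) as [E|E].
  { subst. replace (g x - g x) with 0 by ring. rewrite Rabs_R0. lra. }
  assert (Q := Hd y ltac:(lra) ltac:(lra) E).
  set (qq := (g y - g x) / (y - x)) in *.
  assert (Eq : g y - g x = qq * (y - x)) by (unfold qq; field; lra).
  rewrite Eq, Rabs_mult.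
  assert (Rabs qq <= Rabs l + 1).
  { replace qq with ((qq - l) + l) by ring.
    pose proof (Rabs_triang (qq - l) l). lra. }
  assert (Rabs (y - x) < eps / (Rabs l + 1)) by lra.
  apply Rle_lt_trans with ((Rabs l + 1) * Rabs (y - x)).
  apply Rmult_le_compat_r; auto. apply Rabs_pos.
  apply Rmult_lt_reg_r with (/ (Rabs l + 1)). apply Rinv_0_lt_compat; lra.
  replace ((Rabs l + 1) * Rabs (y - x) * / (Rabs l + 1)) with (Rabs (y - x)) by (field; lra).
  exact H1.
Qed.

Lemma cont_cw f a b t : continuity_pt f t -> cw f a b t.
Proof.
  intros H eps He. destruct (H eps He) as [d [Hd Hd2]].
  exists d. split; auto. intros y Hy Hyt.
  destruct (Req_dec y t) as [E|E].
  { subst. replace (f t - f t) with 0 by ring. rewrite Rabs_R0. lra. }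
  apply (Hd2 y). split. split. exact I. auto. exact Hyt.
Qed.

Definition clampf (a b y : R) := Rmax a (Rmin b y).

Lemma clamp_in a b y : a <= y <= b -> clampf a b y = y.
Proof. intros. unfold clampf. rewrite Rmin_right by lra. rewrite Rmax_right; lra. Qed.

Lemma clamp_prop a b y t : a <= b -> a <= t <= b ->
  a <= clampf a b y <= b /\ Rabs (clampf a b y - t) <= Rabs (y - t).
Proof.
  intros Hab Ht. unfold clampf, Rmax, Rmin.
  repeat destruct Rle_dec; split; try lra;
  unfold Rabs; repeat destruct Rcase_abs; lra.
Qed.

Lemma cmvt (f g f' g' : R -> R) a b : a < b ->
  (forall t, a <= t <= b -> cw f a b t) -> (forall t, a <= t <= b -> cw g a b t) ->
  (forall t, a < t < b -> derivable_pt_lim f t (f' t)) ->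
  (forall t, a < t < b -> derivable_pt_lim g t (g' t)) ->
  exists c, a < c < b /\ (g b - g a) * f' c = (f b - f a) * g' c.
Proof.
  intros Hab Cf Cg Df Dg.
  set (F := fun y => f (clampf a b y)). set (G := fun y => g (clampf a b y)).
  assert (DF : forall (h : R -> R) h', (forall t, a < t < b -> derivable_pt_lim h t (h' t)) ->
     forall t, a < t < b -> derivable_pt_lim (fun y => h (clampf a b y)) t (h' t)).
  { intros h h' Dh t Ht eps He. destruct (Dh t Ht eps He) as [d Hd].
    assert (Hp : 0 < Rmin d (Rmin (t - a) (b - t))).
    { apply Rmin_pos. apply cond_pos. apply Rmin_pos; lra. }
    exists (mkposreal _ Hp). intros hh Hh0 Hh. simpl in Hh.
    assert (h1 := Rmin_l d (Rmin (t - a) (b - t))).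
    assert (h2 := Rmin_r d (Rmin (t - a) (b - t))).
    assert (h3 := Rmin_l (t - a) (b - t)). assert (h4 := Rmin_r (t - a) (b - t)).
    apply Rabs_def2 in Hh as Hh'.
    rewrite (clamp_in a b (t + hh)) by lra. rewrite (clamp_in a b t) by lra.
    apply Hd; auto. lra. }
  assert (CF : forall h, (forall t, a <= t <= b -> cw h a b t) ->
     forall t, a <= t <= b -> continuity_pt (fun y => h (clampf a b y)) t).
  { intros h Ch t Ht eps He. destruct (Ch t Ht eps He) as [d [Hd Hd2]].
    exists d. split; auto. intros y [_ Hy]. simpl in *. unfold R_dist in *.
    rewrite (clamp_in a b t) by lra.
    destruct (clamp_prop a b y t) as [P1 P2]; try lra.
    apply Hd2; auto. lra. }
  destruct (MVT F G a b (fun c Hc => exist _ (f' c) (DF f f' Df c Hc))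
                        (fun c Hc => exist _ (g' c) (DF g g' Dg c Hc)) Hab
             (CF f Cf) (CF g Cg)) as [c [Hc E]].
  exists c. split; auto. simpl in E. unfold F, G in E.
  rewrite !clamp_in in E by lra. exact E.
Qed.

Lemma cw_minus f g a b t : cw f a b t -> cw g a b t -> cw (fun y => f y - g y) a b t.
Proof.
  intros Hf Hg eps He.
  destruct (Hf (eps/2) ltac:(lra)) as [d1 [Hd1 H1]].
  destruct (Hg (eps/2) ltac:(lra)) as [d2 [Hd2 H2]].
  exists (Rmin d1 d2). split. apply Rmin_pos; auto.
  intros y Hy Hyt. pose proof (Rmin_l d1 d2). pose proof (Rmin_r d1 d2).
  specialize (H1 y Hy ltac:(lra)). specialize (H2 y Hy ltac:(lra)).
  replace (f y - g y - (f t - g t)) with ((f y - f t) - (g y - g t)) by ring.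
  pose proof (Rabs_triang (f y - f t) (- (g y - g t))). rewrite Rabs_Ropp in H3.
  unfold Rminus at 1. lra.
Qed.

Lemma Tpoly_cont c x0 n t : continuity_pt (Tpoly c x0 n) t.
Proof.
  destruct n.
  - assert (H : derivable_pt_lim (Tpoly c x0 0) t 0).
    { apply is_derive_Reals. apply (is_derive_ext (fun _ => c 0%nat)).
      intros; rewrite Tpoly_0; auto. auto_derive; auto. }
    apply derivable_continuous_pt. exists 0. exact H.
  - apply derivable_continuous_pt. eexists. apply is_derive_Reals. apply Tpoly_derive.
Qed.

Definition Rk (D : nat -> R -> R) (q : nat) (x0 : R) (k : nat) (y : R) : R :=
  D k y - Tpoly (fun i => D (k + i)%nat x0) x0 (q - k) y.

Lemma Rk_at D q x0 k : Rk D q x0 k x0 = 0.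
Proof. unfold Rk. rewrite Tpoly_at, Nat.add_0_r. ring. Qed.

Lemma Rk_deriv D q x0 k t : (k < q)%nat -> 0 < t < 1 ->
  (forall k x, (k < q)%nat -> 0 <= x <= 1 -> derive01 (D k) x (D (S k) x)) ->
  derivable_pt_lim (Rk D q x0 k) t (Rk D q x0 (S k) t).
Proof.
  intros Hk Ht HD. unfold Rk.
  apply derivable_pt_lim_minus.
  - apply d01_interior; auto. apply HD; auto; lra.
  - replace (q - k)%nat with (S (q - S k)) by lia.
    apply is_derive_Reals.
    replace (Tpoly (fun i => D (S k + i)%nat x0) x0 (q - S k) t) with
      (Tpoly (fun i => D (k + S i)%nat x0) x0 (q - S k) t).
    apply (Tpoly_derive (fun i => D (k + i)%nat x0)).
    apply Tpoly_ext. intros i _. f_equal. lia.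
Qed.

Lemma Rk_cw D q x0 k a b t : (k < q)%nat -> 0 <= a -> b <= 1 -> a <= t <= b ->
  (forall k x, (k < q)%nat -> 0 <= x <= 1 -> derive01 (D k) x (D (S k) x)) ->
  cw (Rk D q x0 k) a b t.
Proof.
  intros Hk Ha Hb Ht HD. unfold Rk.
  apply (cw_minus (D k) (Tpoly (fun i => D (k + i)%nat x0) x0 (q - k))).
  - apply (d01_cw _ _ (D (S k) t)); auto. apply HD; auto; lra.
  - apply cont_cw. apply Tpoly_cont.
Qed.

Lemma chain D q x0 :
  (forall k x, (k < q)%nat -> 0 <= x <= 1 -> derive01 (D k) x (D (S k) x)) ->
  0 <= x0 <= 1 ->
  forall d, (d <= q)%nat -> forall y, 0 <= y <= 1 -> y <> x0 ->
  exists xi, 0 <= xi <= 1 /\ Rabs (xi - x0) <= Rabs (y - x0) /\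
    Rk D q x0 (q - d) y = Rk D q x0 q xi * (y - x0) ^ d / INR (fact d).
Proof.
  intros HD Hx0. induction d; intros Hd y Hy Hyx.
  - exists y. rewrite Nat.sub_0_r. split; auto. split. lra. simpl. field.
  - set (k := (q - S d)%nat).
    assert (Hk : (k < q)%nat) by (unfold k; lia).
    assert (Ek : (q - d)%nat = S k) by (unfold k; lia).
    assert (Hg : forall t, derivable_pt_lim (fun z => 1 * (z - x0) ^ (S d)) t
                   (1 * (INR (S d) * (t - x0) ^ d))).
    { intros t. apply is_derive_Reals. apply mono_derive. }
    assert (MV : forall lo hi, lo < hi -> 0 <= lo -> hi <= 1 ->
       exists c, lo < c < hi /\
         ((1 * (hi - x0) ^ (S d)) - (1 * (lo - x0) ^ (S d))) * Rk D q x0 (S k) c =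
         (Rk D q x0 k hi - Rk D q x0 k lo) * (1 * (INR (S d) * (c - x0) ^ d))).
    { intros lo hi Hlh Hlo Hhi.
      apply (cmvt (Rk D q x0 k) (fun z => 1 * (z - x0) ^ (S d)) (Rk D q x0 (S k))
               (fun t => 1 * (INR (S d) * (t - x0) ^ d))); auto.
      - intros t Ht. apply Rk_cw; auto.
      - intros t Ht. apply cont_cw. apply derivable_continuous_pt. eexists. apply Hg.
      - intros t Ht. apply Rk_deriv; auto. lra. }
    assert (Key : exists c, 0 <= c <= 1 /\ c <> x0 /\ Rabs (c - x0) <= Rabs (y - x0) /\
       (y - x0) ^ (S d) * Rk D q x0 (S k) c = Rk D q x0 k y * (INR (S d) * (c - x0) ^ d)).
    { destruct (Rlt_dec x0 y) as [Lt|Ge].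
      - destruct (MV x0 y) as [c [Hc E]]; try lra.
        exists c. rewrite Rk_at in E. replace (x0 - x0) with 0 in E by ring.
        split. lra. split. lra. split. rewrite !Rabs_right; lra.
        rewrite pow_i in E by lia. lra.
      - destruct (MV y x0) as [c [Hc E]]; try lra.
        exists c. rewrite Rk_at in E. replace (x0 - x0) with 0 in E by ring.
        split. lra. split. lra. split. rewrite !Rabs_left; lra.
        rewrite pow_i in E by lia. lra. }
    destruct Key as [c [Hc [Hcx [Hcy E]]]].
    destruct (IHd ltac:(lia) c Hc Hcx) as [xi [Hxi [Hxic Exi]]].
    rewrite Ek in Exi. exists xi. split; auto. split. lra.
    fold k. rewrite Exi in E.
    assert (Hpc : (c - x0) ^ d <> 0) by (apply pow_nonzero; lra).
    pose proof (INR_fact_neq_0 d).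
    assert (INR (S d) <> 0) by (apply not_0_INR; lia).
    rewrite fact_simpl, mult_INR.
    apply (Rmult_eq_reg_r ((INR (S d) * (c - x0) ^ d))).
    rewrite <- E. simpl pow. field. split; auto.
    apply Rmult_integral_contrapositive; auto.
Qed.

Lemma powr_nonneg x a : 0 <= powr x a.
Proof. unfold powr. destruct Rle_dec. lra. unfold Rpower. left; apply exp_pos. Qed.

Lemma powr_mono u v a : 0 <= u <= v -> 0 <= a -> powr u a <= powr v a.
Proof.
  intros Huv Ha. unfold powr. destruct (Rle_dec u 0).
  - destruct Rle_dec. lra. unfold Rpower; left; apply exp_pos.
  - destruct Rle_dec. lra. apply Rle_Rpower_l; lra.
Qed.

Lemma powr_pow t a q : 0 < t -> powr t a * t ^ q = powr t (INR q + a).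
Proof.
  intros Ht. unfold powr. destruct Rle_dec. lra.
  rewrite <- (Rpower_pow q t Ht). rewrite <- Rpower_plus. f_equal. ring.
Qed.

Lemma taylor_bound lam q alpha f (D : nat -> R -> R) x0 x :
  0 < lam -> 0 < alpha ->
  (forall x, 0 <= x <= 1 -> D 0%nat x = f x) ->
  (forall k x, (k < q)%nat -> 0 <= x <= 1 -> derive01 (D k) x (D (S k) x)) ->
  (forall x y, 0 <= x <= 1 -> 0 <= y <= 1 ->
       Rabs (D q x - D q y) <= lam * powr (Rabs (x - y)) alpha) ->
  0 <= x0 <= 1 -> 0 <= x <= 1 ->
  Rabs (f x - Tpoly (fun i => D i x0) x0 q x) <=
    lam * powr (Rabs (x - x0)) (INR q + alpha) / INR (fact q).
Proof.
  intros Hl Ha H0 HD HH Hx0 Hx.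
  pose proof (INR_fact_lt_0 q) as Hf.
  destruct (Req_dec x x0) as [E|E].
  - subst. rewrite Tpoly_at, H0 by auto. replace (f x0 - f x0) with 0 by ring.
    rewrite Rabs_R0. apply Rmult_le_pos. apply Rmult_le_pos. lra. apply powr_nonneg.
    left. apply Rinv_0_lt_compat. auto.
  - destruct (chain D q x0 HD Hx0 q (Nat.le_refl q) x Hx E) as [xi [Hxi [Hxix Exi]]].
    rewrite Nat.sub_diag in Exi. unfold Rk in Exi.
    rewrite Nat.sub_0_r, Nat.sub_diag, Tpoly_0, Nat.add_0_r in Exi.
    simpl in Exi. rewrite H0 in Exi by auto.
    rewrite Exi. unfold Rdiv. rewrite !Rabs_mult. rewrite <- RPow_abs.
    rewrite (Rabs_right (/ INR (fact q))) by (left; apply Rinv_0_lt_compat; auto).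
    assert (Ht : 0 < Rabs (x - x0)) by (apply Rabs_pos_lt; lra).
    rewrite <- (powr_pow _ _ q Ht).
    apply Rmult_le_compat_r. left; apply Rinv_0_lt_compat; auto.
    rewrite <- Rmult_assoc.
    apply Rmult_le_compat_r. apply pow_le. apply Rabs_pos.
    apply Rle_trans with (lam * powr (Rabs (xi - x0)) alpha). apply HH; auto.
    apply Rmult_le_compat_l. lra. apply powr_mono. split; auto. apply Rabs_pos. lra.
Qed.

Lemma exp_le a b : a <= b -> exp a <= exp b.
Proof. intros H. destruct (Req_dec a b). subst; lra. left; apply exp_increasing; lra. Qed.

Lemma powr_r Y beta m : 0 < Y -> 1/2 <= beta ->
  powr (2 * powr Y (1 / beta) / (2 * 4 ^ m)) beta <= Y / 2 ^ m.
Proof.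
  intros HY Hb.
  assert (E1 : powr Y (1 / beta) = Rpower Y (1 / beta)).
  { unfold powr. destruct Rle_dec; lra. }
  rewrite E1.
  assert (P1 : 0 < Rpower Y (1 / beta)) by (unfold Rpower; apply exp_pos).
  assert (P4 : 0 < 4 ^ m) by (apply pow_lt; lra).
  assert (P2 : 0 < 2 ^ m) by (apply pow_lt; lra).
  replace (2 * Rpower Y (1 / beta) / (2 * 4 ^ m)) with (Rpower Y (1 / beta) * / 4 ^ m)
    by (field; lra).
  assert (Pr : 0 < Rpower Y (1 / beta) * / 4 ^ m).
  { apply Rmult_lt_0_compat; auto. apply Rinv_0_lt_compat; auto. }
  unfold powr. destruct Rle_dec. lra.
  rewrite <- Rpower_mult_distr; auto. 2: apply Rinv_0_lt_compat; auto.
  rewrite Rpower_mult. replace (1 / beta * beta) with 1 by (field; lra).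
  rewrite Rpower_1 by auto. unfold Rdiv. apply Rmult_le_compat_l. lra.
  unfold Rpower. rewrite ln_Rinv by auto. rewrite ln_pow by lra.
  replace (/ 2 ^ m) with (exp (- (INR m * ln 2))).
  2: { rewrite exp_Ropp. f_equal. rewrite <- ln_pow by lra. rewrite exp_ln; auto. }
  apply exp_le.
  replace 4 with (2 * 2) by ring. rewrite ln_mult by lra.
  assert (0 < ln 2). { rewrite <- ln_1. apply ln_increasing; lra. }
  assert (0 <= INR m) by apply pos_INR.
  assert (0 <= INR m * ln 2) by (apply Rmult_le_pos; lra).
  nra.
Qed.

Lemma round_nat n t : 0 <= t <= INR n -> exists j, (j <= n)%nat /\ Rabs (t - INR j) <= 1/2.
Proof.
  induction n; intros Ht.
  - exists 0%nat. split; auto. simpl in *. replace (t - 0) with 0 by lra. rewrite Rabs_R0; lra.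
  - rewrite S_INR in Ht. destruct (Rle_dec t (INR n)) as [L|L].
    + destruct (IHn ltac:(lra)) as [j [Hj1 Hj2]]. exists j. split; auto.
    + destruct (Rle_dec t (INR n + 1/2)).
      * exists n. split; auto. apply Rabs_le; lra.
      * exists (S n). split; auto. rewrite S_INR. apply Rabs_le; lra.
Qed.

Lemma clip_id B v : Rabs v <= B -> clip B v = v.
Proof. intros H. apply Rabs_le_between in H. unfold clip, Rmin, Rmax. repeat destruct Rle_dec; lra. Qed.

Lemma clip_bound B v : 0 <= B -> Rabs (clip B v) <= B.
Proof. intros H. unfold clip, Rmin, Rmax. repeat destruct Rle_dec; apply Rabs_le; lra. Qed.

Lemma clip_lip B u v : 0 <= B -> Rabs (clip B u - clip B v) <= Rabs (u - v).
Proof. intros H. unfold clip, Rmin, Rmax. repeat destruct Rle_dec; unfold Rabs;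
  repeat destruct Rcase_abs; lra. Qed.

Lemma grid_round B dy K m v : 0 < B -> 0 < dy -> 2 * B / dy = INR K -> Rabs v <= B ->
  exists cv, inY B dy m cv /\ Rabs (cv - v) <= dy / 2 ^ m / 2.
Proof.
  intros HB Hdy HK Hv. apply Rabs_le_between in Hv.
  assert (P2 : 0 < 2 ^ m) by (apply pow_lt; lra).
  set (s := dy / 2 ^ m).
  assert (Hs : 0 < s) by (unfold s; apply Rdiv_lt_0_compat; auto).
  assert (EK : INR (2 ^ m * K) = 2 ^ (m + 1) * B / dy).
  { rewrite mult_INR, pow_INR, <- HK, pow_add. replace (INR 2) with 2 by (simpl; ring). field. lra. }
  destruct (round_nat (2 ^ m * K) ((v + B) / s)) as [j [Hj1 Hj2]].
  { split. apply Rdiv_le_0_compat; lra. rewrite EK. unfold s.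
    apply Rmult_le_reg_r with (dy / 2 ^ m). auto.
    replace ((v + B) / (dy / 2 ^ m) * (dy / 2 ^ m)) with (v + B) by (field; lra).
    replace (2 ^ (m + 1) * B / dy * (dy / 2 ^ m)) with (2 * B).
    lra. rewrite pow_add. field. lra. }
  exists (- B + INR j * dy / 2 ^ m). split.
  - exists j. split; auto. rewrite <- EK. apply le_INR; auto.
  - replace (- B + INR j * dy / 2 ^ m - v) with (- (s * ((v + B) / s - INR j))).
    rewrite Rabs_Ropp, Rabs_mult, Rabs_right by lra.
    replace (dy / 2 ^ m / 2) with (s * (1/2)) by (unfold s; field; lra).
    apply Rmult_le_compat_l; lra.
    unfold s. field. lra.
Qed.

Lemma Tpoly_minus c d x0 n y : Tpoly c x0 n y - Tpoly d x0 n y = Tpoly (fun i => c i - d i) x0 n y.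
Proof. induction n. rewrite !Tpoly_0; auto. rewrite !Tpoly_S. rewrite <- IHn. field.
  apply INR_fact_neq_0. Qed.

Lemma Tpoly_small d x0 n y s : 0 <= s -> (forall i, (i <= n)%nat -> Rabs (d i) <= s / 2) ->
  Rabs (y - x0) <= 1/2 -> Rabs (Tpoly d x0 n y) <= s * (1 - (1/2) ^ (S n)).
Proof.
  intros Hs Hd Hy. induction n.
  - rewrite Tpoly_0. specialize (Hd 0%nat (le_n _)). simpl. lra.
  - rewrite Tpoly_S. eapply Rle_trans. apply Rabs_triang.
    assert (T : Rabs (d (S n) / INR (fact (S n)) * (y - x0) ^ S n) <= s / 2 * (1/2) ^ (S n)).
    { unfold Rdiv. rewrite !Rabs_mult, <- RPow_abs.
      pose proof (INR_fact_lt_0 (S n)).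
      assert (1 <= INR (fact (S n))). { apply (le_INR 1). pose proof (lt_O_fact (S n)); lia. }
      rewrite (Rabs_right (/ INR (fact (S n)))) by (left; apply Rinv_0_lt_compat; lra).
      assert (/ INR (fact (S n)) <= 1).
      { rewrite <- Rinv_1. apply Rinv_le_contravar; lra. }
      assert (A1 : Rabs (y - x0) ^ S n <= (1/2) ^ S n).
      { apply pow_incr. split; auto. apply Rabs_pos. }
      assert (A2 : 0 <= Rabs (y - x0) ^ S n) by (apply pow_le; apply Rabs_pos).
      assert (A3 : Rabs (d (S n)) <= s * / 2) by (apply Hd; auto).
      assert (A4 : 0 <= / INR (fact (S n))) by (left; apply Rinv_0_lt_compat; lra).
      set (a := Rabs (d (S n))) in *. set (b := / INR (fact (S n))) in *.
      set (c := Rabs (y - x0) ^ S n) in *. set (P := (1/2) ^ S n) in *.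
      assert (Ha : 0 <= a) by apply Rabs_pos.
      assert (Hab : a * b <= s / 2) by nra.
      apply Rmult_le_compat; auto. apply Rmult_le_pos; auto. }
    assert (IH := IHn ltac:(intros i Hi; apply Hd; lia)).
    simpl in *. lra.
Qed.

Lemma approx B lam q alpha gamma dx dy K f m x0 :
  0 < B -> 0 < lam -> 0 < alpha -> INR q + alpha >= 1 / 2 -> 0 < gamma ->
  dx = 2 * powr (INR (fact q) * gamma / (2 * lam)) (1 / (INR q + alpha)) ->
  dx <= 1 -> dy = gamma / exp 1 -> 2 * B / dy = INR K ->
  HolderClass B lam q alpha f -> 0 <= x0 <= 1 ->
  exists c, (forall i, (i <= q)%nat -> inY B dy m (c i)) /\
   forall x, 0 <= x <= 1 -> Rabs (x - x0) <= dx / (2 * 4 ^ m) ->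
     Rabs (f x - clip B (taylor q c x0 x)) <= gamma / 2 ^ m.
Proof.
  intros HB Hl Ha Hbeta Hg Edx Hdx1 Edy HK HC Hx0.
  destruct HC as [D [H0 [HD [HBd HH]]]].
  assert (He : 2 < exp 1) by (pose proof (exp_ineq1 1 ltac:(lra)); lra).
  assert (Hdy : 0 < dy) by (rewrite Edy; apply Rdiv_lt_0_compat; lra).
  assert (P2 : 0 < 2 ^ m) by (apply pow_lt; lra).
  assert (P4 : 1 <= 4 ^ m) by (apply pow_R1_Rle; lra).
  assert (Hc : forall i, exists cv, inY B dy m cv /\ Rabs (cv - clip B (D i x0)) <= dy / 2 ^ m / 2).
  { intros i. apply (grid_round B dy K); auto. apply clip_bound; lra. }
  destruct (functional_choice _ Hc) as [c Hcc].
  exists c. split. intros i _. apply Hcc.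
  intros x Hx Hr.
  assert (Hfx : f x = clip B (f x)).
  { rewrite clip_id; auto. rewrite <- H0 by auto. apply HBd; auto. lia. }
  rewrite Hfx at 1. eapply Rle_trans. apply clip_lip. lra.
  unfold taylor. fold (Tpoly c x0 q x).
  replace (f x - Tpoly c x0 q x) with
    ((f x - Tpoly (fun i => D i x0) x0 q x) + (Tpoly (fun i => D i x0) x0 q x - Tpoly c x0 q x)) by ring.
  eapply Rle_trans. apply Rabs_triang.
  rewrite Tpoly_minus.
  assert (Hx12 : Rabs (x - x0) <= 1 / 2).
  { eapply Rle_trans. exact Hr. apply Rmult_le_reg_r with (2 * 4 ^ m). lra.
    unfold Rdiv. rewrite Rmult_assoc, Rinv_l by lra. nra. }
  assert (T2 : Rabs (Tpoly (fun i => D i x0 - c i) x0 q x) <= gamma / 2 ^ m / 2).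
  { eapply Rle_trans. apply (Tpoly_small _ _ _ _ (dy / 2 ^ m)); auto.
    left; apply Rdiv_lt_0_compat; auto.
    intros i Hi. destruct (Hcc i) as [_ Hi2]. rewrite clip_id in Hi2.
    rewrite Rabs_minus_sym. exact Hi2. apply HBd; auto.
    assert (0 < (1/2) ^ S q) by (apply pow_lt; lra).
    apply Rle_trans with (dy / 2 ^ m).
    assert (0 < dy / 2 ^ m) by (apply Rdiv_lt_0_compat; auto). nra.
    rewrite Edy. unfold Rdiv. rewrite !Rmult_assoc. apply Rmult_le_compat_l. lra.
    rewrite Rmult_comm. apply Rmult_le_compat_l. left; apply Rinv_0_lt_compat; auto.
    apply Rinv_le_contravar; lra. }
  assert (T1 : Rabs (f x - Tpoly (fun i => D i x0) x0 q x) <= gamma / 2 ^ m / 2).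
  { eapply Rle_trans. apply (taylor_bound lam q alpha f D x0 x); auto.
    pose proof (INR_fact_lt_0 q) as Hf.
    set (Y := INR (fact q) * gamma / (2 * lam)).
    assert (HY : 0 < Y) by (unfold Y; apply Rdiv_lt_0_compat; nra).
    assert (Pw := powr_r Y (INR q + alpha) m HY ltac:(lra)).
    unfold Y in Pw; rewrite <- Edx in Pw; fold Y in Pw.
    assert (Pm := powr_mono (Rabs (x - x0)) (dx / (2 * 4 ^ m)) (INR q + alpha)
                   ltac:(split; auto; apply Rabs_pos) ltac:(pose proof (pos_INR q); lra)).
    apply Rle_trans with (lam * (Y / 2 ^ m) / INR (fact q)).
    unfold Rdiv at 1 3. apply Rmult_le_compat_r. left; apply Rinv_0_lt_compat; auto.
    apply Rmult_le_compat_l; lra.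
    right. unfold Y. field. split; lra. }
  lra.
Qed.

Lemma ind_true (P : Prop) : P -> Defs.ind P = 1.
Proof. intros H. unfold Defs.ind. destruct excluded_middle_informative; tauto. Qed.
Lemma ind_false (P : Prop) : ~ P -> Defs.ind P = 0.
Proof. intros H. unfold Defs.ind. destruct excluded_middle_informative; tauto. Qed.

Lemma sum_zero (f : nat -> R) lo hi : (forall j, (lo <= j <= hi)%nat -> f j = 0) -> sum_n_m f lo hi = 0.
Proof.
  intros H. rewrite (sum_n_m_ext_loc f (fun _ => zero)). exact (@sum_n_m_const_zero R_AbelianMonoid lo hi).
  intros k Hk. rewrite H; auto.
Qed.

Lemma sum_single (f : nat -> R) lo hi k : (lo <= k <= hi)%nat ->
  (forall j, (lo <= j <= hi)%nat -> j <> k -> f j = 0) -> sum_n_m f lo hi = f k.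
Proof.
  intros Hk H. rewrite (sum_n_m_Chasles f lo k hi) by lia.
  rewrite (sum_zero f (S k) hi). 2: { intros j Hj. apply H; lia. }
  destruct (Nat.eq_dec lo k) as [E|E].
  - subst. rewrite sum_n_n. apply Rplus_0_r.
  - destruct k as [|k']. lia. rewrite sum_n_Sm by lia.
    rewrite (sum_zero f lo k'). 2: { intros j Hj. apply H; lia. }
    change (0 + f (S k') + 0 = f (S k')). ring.
Qed.

Lemma tele (V : nat -> R) M : (1 <= M)%nat ->
  sum_n_m (fun m => V m - V (m - 1)%nat) 1 M = V M - V 0%nat.
Proof.
  induction M; intros HM. lia.
  destruct (Nat.eq_dec M 0) as [E|E].
  - subst. rewrite sum_n_n. reflexivity.
  - rewrite sum_n_Sm by lia. rewrite IHM by lia.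
    change (V M - V 0%nat + (V (S M) - V (S M - 1)%nat) = V (S M) - V 0%nat).
    replace (S M - 1)%nat with M by lia. ring.
Qed.

Lemma inIv_mono lo hi lo' hi' x : lo' <= lo -> hi <= hi' -> lo <= hi ->
  inIv lo hi x -> inIv lo' hi' x.
Proof.
  unfold inIv. intros H1 H2 H3 [H|[H H']].
  - left. lra.
  - destruct (Req_dec hi hi'). right; subst; auto. left; lra.
Qed.

Lemma inIv_bounds lo hi x : lo <= hi -> inIv lo hi x -> lo <= x <= hi.
Proof. unfold inIv. intros H [H1|[H1 H2]]; lra. Qed.

Lemma part_ex L h K x : 0 < h -> L <= x < L + INR K * h ->
  exists k, (1 <= k <= K)%nat /\ L + (INR k - 1) * h <= x < L + INR k * h.
Proof.
  intros Hh. induction K; intros Hx.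
  - simpl in Hx. lra.
  - rewrite S_INR in Hx. destruct (Rlt_dec x (L + INR K * h)) as [L1|L1].
    + destruct (IHK ltac:(lra)) as [k [Hk1 Hk2]]. exists k. split; auto. lia.
    + exists (S K). split. lia. rewrite S_INR. lra.
Qed.

Lemma part (I : nat -> R -> Prop) L h K x : 0 < h -> (1 <= K)%nat -> L + INR K * h <= 1 ->
  (forall k, I k x <-> inIv (L + (INR k - 1) * h) (L + INR k * h) x) ->
  inIv L (L + INR K * h) x ->
  exists k, (1 <= k <= K)%nat /\ I k x /\ forall j, (1 <= j <= K)%nat -> I j x -> j = k.
Proof.
  intros Hh HK HL HI Hx.
  assert (U : forall j k, (1 <= j <= K)%nat -> (1 <= k <= K)%nat -> I j x -> I k x -> j = k).
  { assert (U1 : forall j k, (1 <= j <= K)%nat -> (1 <= k <= K)%nat -> I j x -> I k x -> (j < k)%nat -> False).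
    { intros j k Hj Hk Ij Ik Hjk.
      apply HI in Ij. apply HI in Ik.
      assert (A1 : INR j + 1 <= INR k) by (rewrite <- S_INR; apply le_INR; lia).
      assert (A2 : INR k <= INR K) by (apply le_INR; lia).
      assert (B1 : 0 <= (INR k - 1 - INR j) * h) by (apply Rmult_le_pos; lra).
      assert (B2 : (INR j + 1 <= INR K)) by lra.
      assert (B3 : 0 < (INR K - INR j) * h) by (apply Rmult_lt_0_compat; lra).
      unfold inIv in Ij, Ik.
      assert (Lk : L + (INR k - 1) * h <= x).
      { destruct Ik as [Ik|[Ik _]]. lra. nra. }
      destruct Ij as [Ij|[Ij Ij']]; nra. }
    intros j k Hj Hk Ij Ik. destruct (Nat.lt_trichotomy j k) as [C|[C|C]].
    exfalso; exact (U1 j k Hj Hk Ij Ik C). exact C. exfalso; exact (U1 k j Hk Hj Ik Ij C). }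
  assert (E : exists k, (1 <= k <= K)%nat /\ I k x).
  { destruct Hx as [Hx|[Hx Hx1]].
    - destruct (part_ex L h K x Hh Hx) as [k [Hk1 Hk2]]. exists k. split; auto.
      apply HI. left; auto.
    - exists K. split. lia. apply HI. right. auto. }
  destruct E as [k [Hk Ik]]. exists k. split; [exact Hk|]. split; [exact Ik|].
  intros j Hj Ij. apply U; auto.
Qed.

Lemma INR4 : INR 4 = 4. Proof. simpl. ring. Qed.

Lemma pow4 m : (1 <= m)%nat -> 4 ^ m = 4 * 4 ^ (m - 1).
Proof. intros H. replace m with (S (m - 1)) at 1 by lia. reflexivity. Qed.

Lemma INR_pow4 m : INR (4 ^ m) = 4 ^ m.
Proof. rewrite pow_INR, INR4. reflexivity. Qed.

Lemma sub_incl dx a m n x : 0 < dx -> (1 <= m)%nat -> (1 <= n)%nat ->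
  inIsub dx a m n x -> inIsub dx a (m - 1) ((n + 3) / 4) x.
Proof.
  intros Hdx Hm Hn H.
  set (p := ((n + 3) / 4)%nat).
  pose proof (Nat.div_mod (n + 3) 4 ltac:(lia)) as Dm.
  pose proof (Nat.mod_upper_bound (n + 3) 4 ltac:(lia)) as Mu.
  fold p in Dm.
  assert (N1 : (n <= 4 * p)%nat) by lia.
  assert (N2 : (4 * p <= n + 3)%nat) by lia.
  apply le_INR in N1. apply le_INR in N2.
  rewrite mult_INR, INR4 in N1, N2. rewrite plus_INR in N2. replace (INR 3) with 3 in N2 by (simpl; ring).
  assert (Hn1 : 1 <= INR n) by (apply (le_INR 1); lia).
  unfold inIsub in *. rewrite (pow4 m Hm) in H.
  set (W := 4 ^ (m - 1)) in *.
  assert (HW : 0 < W) by (unfold W; apply pow_lt; lra).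
  set (u := dx / (4 * W)).
  assert (Hu : 0 < u) by (unfold u; apply Rdiv_lt_0_compat; lra).
  assert (e1 : (INR n - 1) * dx / (4 * W) = (INR n - 1) * u) by (unfold u; field; lra).
  assert (e2 : INR n * dx / (4 * W) = INR n * u) by (unfold u; field; lra).
  assert (e3 : (INR p - 1) * dx / W = (INR p - 1) * (4 * u)) by (unfold u; field; lra).
  assert (e4 : INR p * dx / W = INR p * (4 * u)) by (unfold u; field; lra).
  rewrite e1, e2 in H. rewrite e3, e4.
  eapply inIv_mono; [ | | | exact H].
  - assert (0 <= u * (INR n - 1 - 4 * (INR p - 1))) by (apply Rmult_le_pos; lra). nra.
  - assert (0 <= u * (4 * INR p - INR n)) by (apply Rmult_le_pos; lra). nra.
  - nra.
Qed.

Lemma sub_in_I dx a m n x : 0 < dx -> (1 <= n <= 4 ^ m)%nat -> inIsub dx a m n x -> inI dx a x.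
Proof.
  intros Hdx Hn H. unfold inIsub, inI in *.
  assert (Hn1 : 1 <= INR n) by (apply (le_INR 1); lia).
  assert (Hn2 : INR n <= 4 ^ m) by (rewrite <- INR_pow4; apply le_INR; lia).
  assert (HW : 0 < 4 ^ m) by (apply pow_lt; lra).
  set (u := dx / 4 ^ m) in *.
  assert (Hu : 0 < u) by (unfold u; apply Rdiv_lt_0_compat; lra).
  assert (e1 : (INR n - 1) * dx / 4 ^ m = (INR n - 1) * u) by (unfold u; field; lra).
  assert (e2 : INR n * dx / 4 ^ m = INR n * u) by (unfold u; field; lra).
  assert (e3 : dx = 4 ^ m * u) by (unfold u; field; lra).
  rewrite e1, e2 in H.
  eapply inIv_mono; [ | | | exact H].
  - nra.
  - rewrite e3 at 1. nra.
  - nra.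
Qed.

Lemma sub_center dx a m n x : 0 < dx -> inIsub dx a m n x ->
  Rabs (x - xcsub dx a m n) <= dx / (2 * 4 ^ m).
Proof.
  intros Hdx H. unfold inIsub, xcsub in *.
  assert (HW : 0 < 4 ^ m) by (apply pow_lt; lra).
  set (u := dx / 4 ^ m) in *.
  assert (Hu : 0 < u) by (unfold u; apply Rdiv_lt_0_compat; lra).
  assert (e1 : (INR n - 1) * dx / 4 ^ m = (INR n - 1) * u) by (unfold u; field; lra).
  assert (e2 : INR n * dx / 4 ^ m = INR n * u) by (unfold u; field; lra).
  assert (e3 : (INR n - 1/2) * dx / 4 ^ m = (INR n - 1/2) * u) by (unfold u; field; lra).
  assert (e4 : dx / (2 * 4 ^ m) = u / 2) by (unfold u; field; lra).
  rewrite e1, e2 in H. rewrite e3, e4.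
  apply inIv_bounds in H. 2: nra.
  apply Rabs_le. nra.
Qed.

Lemma center_I dx a x : 0 < dx -> inI dx a x -> Rabs (x - xc dx a) <= dx / (2 * 4 ^ 0).
Proof.
  intros Hdx H. unfold inI, xc in *. apply inIv_bounds in H. 2: nra.
  simpl. apply Rabs_le. nra.
Qed.

Lemma par_bounds m n : (1 <= m)%nat -> (1 <= n <= 4 ^ m)%nat ->
  (1 <= (n + 3) / 4 <= 4 ^ (m - 1))%nat.
Proof.
  intros Hm Hn.
  assert (E : (4 ^ m = 4 * 4 ^ (m - 1))%nat).
  { replace m with (S (m - 1)) at 1 by lia. apply Nat.pow_succ_r'. }
  pose proof (Nat.div_mod (n + 3) 4 ltac:(lia)) as Dm.
  pose proof (Nat.mod_upper_bound (n + 3) 4 ltac:(lia)) as Mu.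
  set (p := ((n + 3) / 4)%nat) in *. set (W := (4 ^ (m - 1))%nat) in *.
  set (r := ((n + 3) mod 4)%nat) in *. lia.
Qed.

Lemma xcsub_in dx a m n : 0 < dx -> (1 <= a)%nat -> INR a * dx <= 1 -> (1 <= n <= 4 ^ m)%nat ->
  0 <= xcsub dx a m n <= 1.
Proof.
  intros Hdx Ha Had Hn. unfold xcsub.
  assert (Hn1 : 1 <= INR n) by (apply (le_INR 1); lia).
  assert (Hn2 : INR n <= 4 ^ m) by (rewrite <- INR_pow4; apply le_INR; lia).
  assert (Ha1 : 1 <= INR a) by (apply (le_INR 1); lia).
  assert (HW : 0 < 4 ^ m) by (apply pow_lt; lra).
  set (u := dx / 4 ^ m) in *.
  assert (Hu : 0 < u) by (unfold u; apply Rdiv_lt_0_compat; lra).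
  assert (e3 : (INR n - 1/2) * dx / 4 ^ m = (INR n - 1/2) * u) by (unfold u; field; lra).
  assert (e4 : dx = 4 ^ m * u) by (unfold u; field; lra).
  rewrite e3. split. nra. rewrite e4 in Had |- *. nra.
Qed.

Theorem lemma10 (B lam : R) (q : nat) (alpha gamma : R) (N : nat) :
  0 < B -> 0 < lam -> 0 < alpha <= 1 -> INR q + alpha >= 1 / 2 -> 0 < gamma ->
  let beta := INR q + alpha in
  let dx := 2 * powr (INR (fact q) * gamma / (2 * lam)) (1 / beta) in
  let dy := gamma / exp 1 in
  1 / dx = INR N ->
  (exists K : nat, 2 * B / dy = INR K) ->
  (forall f, HolderClass B lam q alpha f ->
     exists g, inF0 B dx dy q N g /\
       forall x, 0 <= x <= 1 -> Rabs (f x - g x) <= gamma) /\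
  (forall M : nat, (1 <= M)%nat -> forall f, HolderClass B lam q alpha f ->
     exists g, inFM B dx dy gamma q N M g /\
       forall x, 0 <= x <= 1 -> Rabs (f x - g x) <= gamma / 2 ^ M).
Proof.
  intros HB Hl Hal Hbeta Hg beta dx dy HN HK.
  assert (Edx : dx = 2 * powr (INR (fact q) * gamma / (2 * lam)) (1 / (INR q + alpha))) by reflexivity.
  assert (Edy : dy = gamma / exp 1) by reflexivity.
  clearbody dx dy beta. destruct HK as [K HK].
  assert (Hdx : 0 < dx).
  { rewrite Edx. pose proof (INR_fact_lt_0 q).
    assert (0 < INR (fact q) * gamma / (2 * lam)) by (apply Rdiv_lt_0_compat; nra).
    unfold powr. destruct Rle_dec. lra. unfold Rpower. pose proof (exp_pos (1 / (INR q + alpha) * ln (INR (fact q) * gamma / (2 * lam)))). lra. }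
  assert (HNdx : INR N * dx = 1) by (rewrite <- HN; field; lra).
  assert (HN1 : (1 <= N)%nat).
  { destruct N. simpl in HNdx. lra. lia. }
  assert (HN1r : 1 <= INR N) by (apply (le_INR 1); auto).
  assert (Hdx1 : dx <= 1) by nra.
  assert (He : 2 < exp 1) by (pose proof (exp_ineq1 1 ltac:(lra)); lra).
  assert (Hdy : 0 < dy) by (rewrite Edy; apply Rdiv_lt_0_compat; lra).
  assert (Cex : forall f, HolderClass B lam q alpha f -> exists C : nat -> R -> nat -> R,
     forall m x0, (forall i, (i <= q)%nat -> inY B dy m (C m x0 i)) /\
       (0 <= x0 <= 1 -> forall x, 0 <= x <= 1 -> Rabs (x - x0) <= dx / (2 * 4 ^ m) ->
          Rabs (f x - clip B (taylor q (C m x0) x0 x)) <= gamma / 2 ^ m)).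
  { intros f Hf.
    assert (Hp : forall p : nat * R, exists c : nat -> R,
       (forall i, (i <= q)%nat -> inY B dy (fst p) (c i)) /\
       (0 <= snd p <= 1 -> forall x, 0 <= x <= 1 -> Rabs (x - snd p) <= dx / (2 * 4 ^ (fst p)) ->
          Rabs (f x - clip B (taylor q c (snd p) x)) <= gamma / 2 ^ (fst p))).
    { intros [m x0]. simpl.
      destruct (Rle_dec 0 x0) as [h1|h1]; [destruct (Rle_dec x0 1) as [h2|h2]|].
      - destruct (approx B lam q alpha gamma dx dy K f m x0) as [c [Hc1 Hc2]]; auto; try lra.
        exists c. split; auto.
      - exists (fun _ => - B). split; [|intros; lra].
        intros i _. exists 0%nat. split. simpl.
        assert (0 < 2 ^ (m + 1)) by (apply pow_lt; lra).
        apply Rdiv_le_0_compat; nra. simpl. field. apply pow_nonzero; lra.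
      - exists (fun _ => - B). split; [|intros; lra].
        intros i _. exists 0%nat. split. simpl.
        assert (0 < 2 ^ (m + 1)) by (apply pow_lt; lra).
        apply Rdiv_le_0_compat; nra. simpl. field. apply pow_nonzero; lra. }
    destruct (functional_choice _ Hp) as [Cp HCp].
    exists (fun m x0 => Cp (m, x0)). intros m x0. exact (HCp (m, x0)). }
  assert (Ga : forall x, 0 <= x <= 1 -> exists a, (1 <= a <= N)%nat /\ inI dx a x /\
            forall j, (1 <= j <= N)%nat -> inI dx j x -> j = a).
  { intros x Hx. apply (part (inI dx) 0 dx N x); auto. lra.
    - intros k. unfold inI. rewrite !Rplus_0_l. tauto.
    - unfold inIv. rewrite Rplus_0_l, HNdx. destruct (Req_dec x 1). right; auto. left; lra. }
  assert (xc_in : forall a, (1 <= a <= N)%nat -> 0 <= xc dx a <= 1).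
  { intros a Ha. unfold xc.
    assert (1 <= INR a) by (apply (le_INR 1); lia).
    assert (INR a <= INR N) by (apply le_INR; lia). nra. }
  split.
  - intros f Hf. destruct (Cex f Hf) as [C HC].
    set (P0 := fun a x => clip B (taylor q (C 0%nat (xc dx a)) (xc dx a) x)).
    exists (fun x => sum_n_m (fun a => P0 a x * Defs.ind (inI dx a x)) 1 N). split.
    + exists P0. split; [|reflexivity]. intros a Ha. exists (C 0%nat (xc dx a)). split.
      apply HC. reflexivity.
    + intros x Hx. destruct (Ga x Hx) as [a [Ha [Ia Ua]]].
      rewrite (sum_single _ 1 N a Ha).
      2: { intros j Hj Hja. rewrite ind_false. ring. intros Ij. apply Hja. apply Ua; auto. }
      rewrite ind_true by auto. rewrite Rmult_1_r.
      replace gamma with (gamma / 2 ^ 0) by (simpl; field).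
      apply HC; auto. apply center_I; auto.
  - intros M HM f Hf. destruct (Cex f Hf) as [C HC].
    set (P0 := fun a x => clip B (taylor q (C 0%nat (xc dx a)) (xc dx a) x)).
    set (Psub := fun m a n x => clip B (taylor q (C m (xcsub dx a m n)) (xcsub dx a m n) x)).
    set (par := fun n => ((n + 3) / 4)%nat).
    set (Pp := fun m a n => if (m <=? 1)%nat then P0 a else Psub (m - 1)%nat a (par n)).
    set (Q := fun m a n x => clip (3 * gamma / 2 ^ m) (Psub m a n x - Pp m a n x)).
    exists (fun x => sum_n_m (fun a => P0 a x * Defs.ind (inI dx a x)) 1 N +
          sum_n_m (fun m => sum_n_m (fun a => sum_n_m (fun n =>
             Q m a n x * Defs.ind (inIsub dx a m n x)) 1 (4 ^ m)) 1 N) 1 M).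
    split.
    + exists P0, Q. split; [|split; [|reflexivity]].
      * intros a Ha. exists (C 0%nat (xc dx a)). split. apply HC. reflexivity.
      * intros m a n Hm Ha Hn. exists (Psub m a n), (Pp m a n). split.
        { exists (C m (xcsub dx a m n)). split. apply HC. reflexivity. }
        split; [|reflexivity].
        destruct (Nat.eq_dec m 1) as [E|E].
        { left. split; auto. unfold Pp. rewrite E. simpl.
          exists (C 0%nat (xc dx a)). split. apply HC. reflexivity. }
        right. split. lia. exists (par n). split. apply par_bounds; lia.
        split. intros x Hx. apply sub_incl; auto; lia.
        unfold Pp. replace (m <=? 1)%nat with false by (symmetry; apply Nat.leb_gt; lia).
        exists (C (m - 1)%nat (xcsub dx a (m - 1) (par n))). split. apply HC. reflexivity.
    + intros x Hx. destruct (Ga x Hx) as [a [Ha [Ia Ua]]].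
      assert (Had : INR a * dx <= 1).
      { rewrite <- HNdx. apply Rmult_le_compat_r. lra. apply le_INR; lia. }
      assert (Hn : forall m, exists n, (1 <= n <= 4 ^ m)%nat /\ inIsub dx a m n x /\
                  forall j, (1 <= j <= 4 ^ m)%nat -> inIsub dx a m j x -> j = n).
      { intros m. assert (HW : 0 < 4 ^ m) by (apply pow_lt; lra).
        assert (eL : (INR a - 1) * dx + INR (4 ^ m) * (dx / 4 ^ m) = INR a * dx)
          by (rewrite INR_pow4; field; lra).
        apply (part (fun n => inIsub dx a m n) ((INR a - 1) * dx) (dx / 4 ^ m) (4 ^ m) x).
        - apply Rdiv_lt_0_compat; lra.
        - pose proof (Nat.pow_nonzero 4 m ltac:(lia)). lia.
        - rewrite eL; auto.
        - intros k. unfold inIsub.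
          assert (e1 : (INR a - 1) * dx + (INR k - 1) * dx / 4 ^ m =
                       (INR a - 1) * dx + (INR k - 1) * (dx / 4 ^ m)) by (field; lra).
          assert (e2 : (INR a - 1) * dx + INR k * dx / 4 ^ m =
                       (INR a - 1) * dx + INR k * (dx / 4 ^ m)) by (field; lra).
          rewrite e1, e2. tauto.
        - rewrite eL. unfold inI in Ia. exact Ia. }
      destruct (functional_choice _ Hn) as [nx Hnx].
      set (V := fun m => if (m =? 0)%nat then P0 a x else Psub m a (nx m) x).
      assert (HV : forall m, Rabs (f x - V m) <= gamma / 2 ^ m).
      { intros m. destruct m as [|m'].
        - unfold V. simpl. apply HC; auto. apply center_I; auto.
        - unfold V. simpl Nat.eqb. cbv iota. unfold Psub.
          destruct (Hnx (S m')) as [Hn1 [Hn2 Hn3]].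
          apply HC; auto. apply xcsub_in; auto; lia. apply sub_center; auto. }
      assert (Hpar : forall m, (2 <= m)%nat -> par (nx m) = nx (m - 1)%nat).
      { intros m Hm. destruct (Hnx m) as [Hn1 [Hn2 Hn3]].
        destruct (Hnx (m - 1)%nat) as [Hm1 [Hm2 Hm3]].
        apply Hm3. apply par_bounds; lia. apply sub_incl; auto; lia. }
      assert (HQ : forall m, (1 <= m)%nat -> Q m a (nx m) x = V m - V (m - 1)%nat).
      { intros m Hm. unfold Q.
        assert (E1 : Psub m a (nx m) x = V m).
        { unfold V. replace (m =? 0)%nat with false by (symmetry; apply Nat.eqb_neq; lia). reflexivity. }
        assert (E2 : Pp m a (nx m) x = V (m - 1)%nat).
        { unfold Pp, V. destruct (Nat.eq_dec m 1) as [E|E].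
          - subst. reflexivity.
          - replace (m <=? 1)%nat with false by (symmetry; apply Nat.leb_gt; lia).
            replace (m - 1 =? 0)%nat with false by (symmetry; apply Nat.eqb_neq; lia).
            rewrite Hpar by lia. reflexivity. }
        rewrite E1, E2. apply clip_id.
        pose proof (HV m). pose proof (HV (m - 1)%nat).
        assert (E3 : 2 ^ m = 2 * 2 ^ (m - 1)).
        { replace m with (S (m - 1)) at 1 by lia. reflexivity. }
        assert (0 < 2 ^ (m - 1)) by (apply pow_lt; lra).
        replace (V m - V (m - 1)%nat) with ((f x - V (m - 1)%nat) - (f x - V m)) by ring.
        eapply Rle_trans. apply Rabs_triang. rewrite Rabs_Ropp.
        rewrite E3 in *. replace (3 * gamma / (2 * 2 ^ (m - 1))) with
          (gamma / 2 ^ (m - 1) + gamma / (2 * 2 ^ (m - 1))) by (field; lra). lra. }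
      rewrite (sum_single _ 1 N a Ha).
      2: { intros j Hj Hja. rewrite ind_false. ring. intros Ij. apply Hja. apply Ua; auto. }
      rewrite ind_true by auto. rewrite Rmult_1_r.
      rewrite (sum_n_m_ext_loc _ (fun m => V m - V (m - 1)%nat)).
      2: { intros m Hm. rewrite (sum_single _ 1 N a Ha).
           2: { intros j Hj Hja. apply sum_zero. intros n Hn'. rewrite ind_false. ring.
                intros Ij. apply Hja. apply Ua; auto. eapply sub_in_I; eauto. }
           destruct (Hnx m) as [Hn1 [Hn2 Hn3]].
           rewrite (sum_single _ 1 (4 ^ m) (nx m) Hn1).
           2: { intros j Hj Hjn. rewrite ind_false. ring. intros Ij. apply Hjn. apply Hn3; auto. }
           rewrite ind_true by auto. rewrite Rmult_1_r. apply HQ; lia. }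
      rewrite tele by auto.
      replace (P0 a x + (V M - V 0%nat)) with (V M) by (unfold V; simpl; ring).
      apply HV.
Qed.
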